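(* In any execution of $\mathtt{search}(\mathcal{G},T)$ (defined in the context), consider the lowest region of the decomposition, i.e. an iteration of the inner loop in which the computed region $Z$ equals the whole vertex set $V'$ of the current subgame $\mathcal{G}'$. Then extract-tangles$(Z,\sigma)$ returns at least one tangle.
   Context: Parity games: $\mathcal{G}=(V_0,V_1,E,\mathrm{pr})$, $V=V_0\cup V_1$ finite, partitioned into vertices of Even ($0$) and Odd ($1$); $E\subseteq V\times V$ with every vertex having a successor; $\mathrm{pr}:V\to\{0,\dots,d\}$. $E(u)=\{v:(u,v)\in E\}$, $\mathrm{pr}(U)=\max_{u\in U}\mathrm{pr}(u)$, $\mathrm{pr}^{-1}(p)$ the set of vertices of priority $p$, $\overline{\alpha}=1-\alpha$. A cycle is won by $\alpha$ if its highest priority has parity $\alpha$. A strategy of $\alpha$ is a partial function $\sigma$ on $V_\alpha$ with $\sigma(v)\in E(v)$. For $U\subseteq V$, $\mathcal{G}\cap U$ is the subgame with vertices $V\cap U$ and edges $E\cap(U\times U)$, and $\mathcal{G}\setminus U=\mathcal{G}\cap(V\setminus U)$. A $p$-tangle is a nonempty $U\subseteq V$ with $p=\mathrm{pr}(U)$ such that for $\alpha\equiv p\pmod 2$ there is a strategy $\sigma:U\cap V_\alpha\to U$ (witness strategy $\sigma_T(U)$) with $(U,E\cap(\sigma\cup((U\cap V_{\overline{\alpha}})\times U)))$ strongly connected and all its cycles won by $\alpha$ (''won by $\alpha$''). For a tangle $t$ won by $\alpha$ in a game with edge set $E$, $E_T(t)=\{v\notin t:\exists u\in t\cap V_{\overline{\alpha}},(u,v)\in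 E\}$. $T_\alpha$ denotes the tangles of $T$ won by $\alpha$; for a subgame $\mathcal{G}'$, $T\cap\mathcal{G}'$ denotes the tangles of $T$ contained in its vertex set. Tangle attractor: for a game $\mathcal{G}$ with vertices $V$, tangles $T$, player $\alpha$ and $A\subseteq V$, $\mathit{TAttr}^{\mathcal{G},T}_\alpha(A)$ is the least $Z\supseteq A$ containing every $v\in V_\alpha$ with $E(v)\cap Z\neq\emptyset$, every $v\in V_{\overline{\alpha}}$ with $E(v)\subseteq Z$, and every vertex of every $t\in T_\alpha$ with $\emptyset\neq E_T(t)\subseteq Z$ ($E_T$ computed in $\mathcal{G}$). It is computed iteratively together with a strategy $\sigma$ of $\alpha$ (initially empty): when an $\alpha$-vertex is added individually, $\sigma$ maps it to a successor already in $Z$; each $\alpha$-vertex of $A$ gets as $\sigma$-value a successor in $Z$ once one exists; when the vertices of a tangle $t$ are added, $\sigma(u):=\sigma_T(t)(u)$ for every $\alpha$-vertex $u\in t$ not yet in $\mathrm{dom}(\sigma)$. extract-tangles$(Z,\sigma)$, for a subgame $\mathcal{G}'=(V',E')$ with top priority $p$, $\alpha\equiv p$, region $Z\subseteq V'$ and strategy $\sigma$: let $Y_Z$ be the greatest $X\subseteq Z$ such that every $v\in X\cap V_{\overline{\alpha}}$ has $E'(v)\subseteq X$ and every $v\in X\cap V_\alpha$ has $\sigma(v)\in X$; let $H$ be the graph on $Y_Z$ with edges $(v,\sigma(v))$ for $v\in Y_Z\cap V_\alpha$ and $(v,w)\in E'$ for $v\in Y_Z\cap V_{\overline{\alpha}}$;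 return all bottom strongly connected components of $H$ that contain at least one edge of $H$, each with witness strategy $\sigma$ restricted to it. $\mathtt{search}(\mathcal{G},T)$ (with $T$ a set of tangles of $\mathcal{G}$): repeat forever: set $r:=\emptyset$ (a partial function $V\to\mathbb{N}$, the region function) and $Y:=\emptyset$; while $V\setminus\mathrm{dom}(r)\neq\emptyset$: let $\mathcal{G}':=\mathcal{G}\setminus\mathrm{dom}(r)$ with vertex set $V'$, $T':=T\cap\mathcal{G}'$, $p:=\mathrm{pr}(\mathcal{G}')$, $\alpha:=p\bmod 2$; compute $(Z,\sigma):=\mathit{TAttr}^{\mathcal{G}',T'}_\alpha(\mathrm{pr}^{-1}(p)\cap V')$ (the region of priority $p$); let $A:=$ extract-tangles$(Z,\sigma)$; if some $t\in A$ has $E_T(t)=\emptyset$ with $E_T$ computed in the full game $\mathcal{G}$, return $(T\cup Y,t)$; otherwise set $r(v):=p$ for all $v\in Z$ and $Y:=Y\cup A$. After the while-loop, set $T:=T\cup Y$. *)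

(* Defs.v *)
From mathcomp Require Import all_boot.
Set Implicit Arguments. Unset Strict Implicit. Unset Printing Implicit Defensive.

Section ParityDefs.
Variable V : finType.
(* owner v = false : v in V_0 (Even);  owner v = true : v in V_1 (Odd).
   A player alpha is a bool; player of priority p is odd p. *)
Variable owner : V -> bool.
Variable E : rel V.
Variable pr : V -> nat.

(* a (candidate) tangle: a vertex set together with its witness strategy *)
Definition tangle := ({set V} * {ffun V -> option V})%type.

Definition pmax (U : {set V}) : nat := \max_(v in U) pr v.

Definition tangle_rel (U : {set V}) (s : {ffun V -> option V}) (a : bool) : rel V :=
  fun u v => [&& u \in U, v \in U & if owner u == a then s u == Some v else E u v].

Definition is_tangle (t : tangle) : Prop :=
  let U := t.1 in let s := t.2 in let a := odd (pmax U) in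
  [/\ U != set0,
      (forall u, u \in U -> owner u = a -> exists2 w, s u = Some w & (w \in U) && E u w),
      (forall u v, u \in U -> v \in U -> connect (tangle_rel U s a) u v) &
      (forall c : seq V, c != [::] -> cycle (tangle_rel U s a) c ->
          odd (\max_(v <- c) pr v) = a)].

Definition ET (S : {set V}) (t : tangle) : {set V} :=
  [set v in S | (v \notin t.1) &&
     [exists u in t.1, [&& owner u != odd (pmax t.1), u \in S & E u v]]].

Definition upd (s : {ffun V -> option V}) (v w : V) : {ffun V -> option V} :=
  [ffun x => if x == v then Some w else s x].

Definition tangle_upd (s : {ffun V -> option V}) (t : tangle) (a : bool)
  : {ffun V -> option V} :=
  [ffun u => if [&& u \in t.1, owner u == a & s u == None] then t.2 u else s u].

Definition empty_strat : {ffun V -> option V} := [ffun _ => None].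

(* One step of the iterative computation of TAttr^{G',T'}_a(A), G' = G ∩ S *)
Inductive tattr_step (S : {set V}) (Tt : {set tangle}) (a : bool) (A : {set V})
  : ({set V} * {ffun V -> option V}) -> ({set V} * {ffun V -> option V}) -> Prop :=
| ta_alpha (Z : {set V}) (s : {ffun V -> option V}) v w : v \in S -> v \notin Z -> owner v = a -> w \in Z -> E v w ->
    tattr_step S Tt a A (Z, s) (v |: Z, upd s v w)
| ta_nalpha (Z : {set V}) (s : {ffun V -> option V}) v : v \in S -> v \notin Z -> owner v != a ->
    (forall w, w \in S -> E v w -> w \in Z) ->
    tattr_step S Tt a A (Z, s) (v |: Z, s)
| ta_init (Z : {set V}) (s : {ffun V -> option V}) v w : v \in A -> owner v = a -> s v = None -> w \in Z -> E v w ->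
    tattr_step S Tt a A (Z, s) (Z, upd s v w)
| ta_tangle (Z : {set V}) (s : {ffun V -> option V}) (t : tangle) : t \in Tt -> t.1 \subset S -> odd (pmax t.1) = a ->
    ~~ (t.1 \subset Z) -> ET S t != set0 -> ET S t \subset Z ->
    tattr_step S Tt a A (Z, s) (Z :|: t.1, tangle_upd s t a).

Inductive tattr_reach (S : {set V}) (Tt : {set tangle}) (a : bool) (A : {set V})
  : ({set V} * {ffun V -> option V}) -> Prop :=
| tr_init : tattr_reach S Tt a A (A, empty_strat)
| tr_step st st' : tattr_reach S Tt a A st -> tattr_step S Tt a A st st' ->
    tattr_reach S Tt a A st'.

Definition tattr_result (S : {set V}) (Tt : {set tangle}) (a : bool) (A : {set V})
  (Z : {set V}) (s : {ffun V -> option V}) : Prop :=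
  tattr_reach S Tt a A (Z, s) /\ ~ (exists st', tattr_step S Tt a A (Z, s) st').

Definition ext_closed (S : {set V}) (a : bool) (s : {ffun V -> option V})
  (X : {set V}) : bool :=
  [forall v in X, if owner v == a then (if s v is Some w then w \in X else false)
                  else [forall w, (E v w && (w \in S)) ==> (w \in X)]].

Definition YZ (S : {set V}) (a : bool) (Z : {set V}) (s : {ffun V -> option V})
  : {set V} :=
  \bigcup_(X : {set V} | (X \subset Z) && ext_closed S a s X) X.

Definition Hrel (S : {set V}) (a : bool) (Y : {set V}) (s : {ffun V -> option V})
  : rel V :=
  fun u v => [&& u \in Y, v \in Y &
                 if owner u == a then s u == Some v else E u v && (v \in S)].

Definition restrict_strat (s : {ffun V -> option V}) (C : {set V})
  : {ffun V -> option V} := [ffun v => if v \in C then s v else None].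

Definition bscc_with_edge (H : rel V) (Y C : {set V}) : bool :=
  [&& C \subset Y, C != set0,
      [forall u in C, forall v in C, connect H u v],
      [forall u in C, forall v, H u v ==> (v \in C)] &
      [exists u in C, exists v in C, H u v]].

Definition extract_tangles (S : {set V}) (a : bool) (Z : {set V})
  (s : {ffun V -> option V}) : {set tangle} :=
  let Y := YZ S a Z s in
  [set t : tangle | bscc_with_edge (Hrel S a Y s) Y t.1 &&
                    (t.2 == restrict_strat s t.1)].

(* search: the region function r is a finite function V -> option nat *)
Definition domr (r : {ffun V -> option nat}) : {set V} := [set v | r v != None].
Definition empty_r : {ffun V -> option nat} := [ffun _ => None].
Definition subT (T : {set tangle}) (S : {set V}) : {set tangle} :=
  [set t in T | t.1 \subset S].
Definition top_set (S : {set V}) : {set V} := [set v in S | pr v == pmax S].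
Definition set_r (r : {ffun V -> option nat}) (Z : {set V}) (p : nat)
  : {ffun V -> option nat} := [ffun v => if v \in Z then Some p else r v].

(* search_reach T0 T r Y : starting search(G, T0), a state (T, r, Y) is reached
   at the beginning of an iteration of the inner while-loop test. *)
Inductive search_reach (T0 : {set tangle})
  : {set tangle} -> {ffun V -> option nat} -> {set tangle} -> Prop :=
| sr_start : search_reach T0 T0 empty_r set0
| sr_inner (T : {set tangle}) (r : {ffun V -> option nat}) (Y : {set tangle}) (Z : {set V}) (s : {ffun V -> option V}) :
    search_reach T0 T r Y ->
    ~: domr r != set0 ->
    tattr_result (~: domr r) (subT T (~: domr r)) (odd (pmax (~: domr r)))
                 (top_set (~: domr r)) Z s ->
    (forall t, t \in extract_tangles (~: domr r) (odd (pmax (~: domr r))) Z s ->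
               ET [set: V] t != set0) ->
    search_reach T0 T (set_r r Z (pmax (~: domr r)))
                 (Y :|: extract_tangles (~: domr r) (odd (pmax (~: domr r))) Z s)
| sr_outer (T : {set tangle}) (r : {ffun V -> option nat}) (Y : {set tangle}) :
    search_reach T0 T r Y -> ~: domr r = set0 ->
    search_reach T0 (T :|: Y) empty_r set0.

End ParityDefs.

(* Main.v *)
Require Import Defs.
From mathcomp Require Import all_boot.
Set Implicit Arguments. Unset Strict Implicit. Unset Printing Implicit Defensive.

Section Proofs.
Variable V : finType.
Variable owner : V -> bool.
Variable E : rel V.
Variable pr : V -> nat.

Lemma connect_closed (e : rel V) (P : pred V) x y :
  (forall u v, P u -> e u v -> P v) -> P x -> connect e x y -> P y.
Proof.
move=> H Px /connectP [p pth ->]; elim: p x Px pth => //= z p IH x Px /andP [exz pth].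
exact: IH (H _ _ Px exz) pth.
Qed.

Lemma connect_transfer (e e' : rel V) (P : pred V) x y :
  (forall u v, P u -> e u v -> P v /\ e' u v) -> P x -> connect e x y -> connect e' x y.
Proof.
move=> H Px /connectP [p pth ->]; elim: p x Px pth => [|z p IH] x Px /=.
  by rewrite connect0.
case/andP=> exz pth; have [Pz e'xz] := H _ _ Px exz.
exact: connect_trans (connect1 e'xz) (IH z Pz pth).
Qed.

Definition Qt (t : tangle V) := forall u, u \in t.1 -> owner u = odd (pmax pr t.1) ->
  exists2 w, t.2 u = Some w & w \in t.1.
Definition P2t (t : tangle V) := forall u v, u \in t.1 -> v \in t.1 ->
  connect (tangle_rel owner E t.1 t.2 (odd (pmax pr t.1))) u v.
Definition good t := Qt t /\ P2t t.

Definition closedZ (S : {set V}) (a : bool) (Z : {set V}) (s : {ffun V -> option V})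
  (X : {set V}) :=
  forall u, u \in X -> (owner u = a -> exists2 w, s u = Some w & w \in X) /\
     (owner u != a -> forall w, w \in S -> E u w -> w \in Z -> w \in X).

Definition ainv (S : {set V}) (a : bool) (A : {set V}) (st : {set V} * {ffun V -> option V}) :=
  [/\ A \subset st.1,
      (forall u w, st.2 u = Some w -> w \in st.1),
      (forall u, st.2 u != None -> u \in st.1),
      (forall u, u \in st.1 -> owner u = a -> st.2 u = None -> u \in A) &
      (forall X : {set V}, X \subset st.1 -> X != set0 -> closedZ S a st.1 st.2 X ->
         exists2 v, v \in X & v \in A)].

Lemma closed_shrink (S : {set V}) (a : bool) (Z : {set V}) (s s' : {ffun V -> option V}) (X : {set V}) (v : V) : v \notin Z -> (forall u, u != v -> s' u = s u) ->
  (forall u w, s u = Some w -> w \in Z) -> X \subset v |: Z ->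
  closedZ S a (v |: Z) s' X -> (X :\ v) \subset Z /\ closedZ S a Z s (X :\ v).
Proof.
move=> vZ ss' R XZ cX; split.
  apply/subsetP => x; rewrite in_setD1 => /andP [xv xX].
  by have := subsetP XZ x xX; rewrite in_setU1 (negbTE xv).
move=> u; rewrite in_setD1 => /andP [uv uX]; have [c1 c2] := cX u uX; split.
  move=> ou; have [w0] := c1 ou; rewrite ss' // => suw0 w0X; exists w0 => //.
  rewrite in_setD1 w0X andbT; apply: contraNneq vZ => <-; exact: R suw0.
move=> ou w0 w0S Ew0 w0Z.
have w0X : w0 \in X by apply: c2 => //; rewrite in_setU1 w0Z orbT.
rewrite in_setD1 w0X andbT; apply: contraNneq vZ => <-; exact: w0Z.
Qed.

Lemma tattr_inv (S : {set V}) (Tt : {set tangle V}) (a : bool) (A : {set V}) (st : {set V} * {ffun V -> option V}) :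
  (forall v, v \in S -> exists2 w, w \in S & E v w) ->
  (forall t, t \in Tt -> good t) ->
  tattr_reach owner E pr S Tt a A st -> ainv S a A st.
Proof.
move=> HS HT; elim=> [|st0 st' _ IH step].
  split=> //=.
  - by move=> u w; rewrite ffunE.
  - by move=> u; rewrite ffunE.
  - by move=> X XA X0 _; case/set0Pn: X0 => v vX; exists v => //; apply: (subsetP XA).
case: step IH; rewrite /ainv /=.
- move=> Z s v w vS vZ ov wZ Evw [AZ R Dom D I]; split => /=.
  + exact: subset_trans AZ (subsetUr _ _).
  + move=> u w'; rewrite /upd ffunE in_setU1; case: (eqVneq u v) => [_ [<-]|_ /R ->].
      by rewrite wZ orbT.
    by rewrite orbT.
  + by move=> u; rewrite /upd ffunE in_setU1; case: (eqVneq u v) => //= _ /Dom.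
  + by move=> u; rewrite /upd ffunE in_setU1; case: (eqVneq u v) => //= _; exact: D.
  + move=> X XZ X0 cX.
    have ss' : forall u, u != v -> upd s v w u = s u.
      by move=> u uv; rewrite /upd ffunE (negbTE uv).
    have [X'Z cX'] := closed_shrink vZ ss' R XZ cX.
    have X'0 : X :\ v != set0.
      case vX: (v \in X).
        have [c1 _] := cX v vX; have [w0] := c1 ov; rewrite /upd ffunE eqxx => -[<-] wX.
        apply/set0Pn; exists w; rewrite in_setD1 wX andbT.
        by apply: contraNneq vZ => <-.
      case/set0Pn: X0 => x xX; apply/set0Pn; exists x; rewrite in_setD1 xX andbT.
      by apply: contraFneq vX => <-.
    have [x] := I _ X'Z X'0 cX'; rewrite in_setD1 => /andP [_ xX] xA; by exists x.
- move=> Z s v vS vZ ov Hall [AZ R Dom D I]; split => /=.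
  + exact: subset_trans AZ (subsetUr _ _).
  + by move=> u w /R; rewrite in_setU1 => ->; rewrite orbT.
  + by move=> u /Dom; rewrite in_setU1 => ->; rewrite orbT.
  + move=> u; rewrite in_setU1; case: (eqVneq u v) => [-> _ ov'|_ /= uZ]; last exact: D.
    by rewrite ov' eqxx in ov.
  + move=> X XZ X0 cX.
    have [X'Z cX'] := closed_shrink (s' := s) vZ (fun u _ => erefl) R XZ cX.
    have X'0 : X :\ v != set0.
      case vX: (v \in X).
        have [_ c2] := cX v vX; have [w wS Evw] := HS v vS.
        have wZ := Hall w wS Evw.
        have wX : w \in X by apply: c2 => //; rewrite in_setU1 wZ orbT.
        apply/set0Pn; exists w; rewrite in_setD1 wX andbT.
        by apply: contraNneq vZ => <-.
      case/set0Pn: X0 => x xX; apply/set0Pn; exists x; rewrite in_setD1 xX andbT.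
      by apply: contraFneq vX => <-.
    have [x] := I _ X'Z X'0 cX'; rewrite in_setD1 => /andP [_ xX] xA; by exists x.
- move=> Z s v w vA ov sv wZ Evw [AZ R Dom D I]; split => //=.
  + move=> u w'; rewrite /upd ffunE; case: (eqVneq u v) => [_ [<-]|_ /R //]; exact: wZ.
  + move=> u; rewrite /upd ffunE; case: (eqVneq u v) => [->|_ /Dom //]; by rewrite (subsetP AZ).
  + by move=> u; rewrite /upd ffunE; case: (eqVneq u v) => //= _; exact: D.
  + move=> X XZ X0 cX.
    case vX: (v \in X); first by exists v.
    apply: I => // u uX; have [c1 c2] := cX u uX; split => //.
    have uv : u != v by apply: contraFneq vX => <-.
    by move=> ou; have [w0] := c1 ou; rewrite /upd ffunE (negbTE uv) => ->; exists w0.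
- move=> Z s t tT tS ta ntZ ET0 ETZ [AZ R Dom D I].
  have [Q P2] := HT t tT.
  have Qa : forall u, u \in t.1 -> owner u = a -> exists2 w, t.2 u = Some w & w \in t.1.
    by move=> u ut ou; apply: Q => //; rewrite ta.
  split => /=.
  + exact: subset_trans AZ (subsetUl _ _).
  + move=> u w; rewrite /tangle_upd ffunE; case: ifP => [/and3P [ut /eqP ou _] tuw | _ /R wZ].
      have [w' tuw' w't] := Qa u ut ou; move: tuw; rewrite tuw' => -[<-].
      by rewrite in_setU w't orbT.
    by rewrite in_setU wZ.
  + move=> u; rewrite /tangle_upd ffunE in_setU.
    by case: ifP => [/and3P [-> _ _] _|_ /Dom ->]; rewrite ?orbT.
  + move=> u; rewrite in_setU /tangle_upd ffunE => uZ' ou.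
    case: (boolP (u \in Z)) => uZ.
      case: ifP => [/and3P[ut _ _]|_]; last exact: D.
      by have [w -> _] := Qa u ut ou.
    have ut : u \in t.1 by move: uZ'; rewrite (negbTE uZ).
    case su: (s u) => [x|].
      by have := Dom u; rewrite su => /(_ isT); rewrite (negbTE uZ).
    rewrite ut ou eqxx /=; by have [w -> _] := Qa u ut ou.
  + move=> X XZ' X0 cX.
    case: (pickP [pred u | [&& u \in X, u \in Z, owner u == a & s u == None]]) => [u /and4P [uX uZ /eqP ou /eqP su]|hnone].
      by exists u => //; apply: D.
    case: (boolP (X :&: Z == set0)) => [/eqP XZ0|X'0].
      have nZ : forall x, x \in X -> x \notin Z.
        move=> x xX; apply/negP => xZ.
        have : x \in X :&: Z by rewrite inE xX xZ.
        by rewrite XZ0 inE.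
      have Xt : forall x, x \in X -> x \in t.1.
        by move=> x xX; have := subsetP XZ' x xX; rewrite in_setU (negbTE (nZ x xX)).
      case/set0Pn: X0 => x xX.
      have tX : forall y, y \in t.1 -> y \in X.
        move=> y yt; apply: (connect_closed (P := mem X)) (P2 x y (Xt x xX) yt) => //.
        move=> u v uX; rewrite /tangle_rel ta => /and3P [_ vt].
        have [c1 c2] := cX u uX.
        case: (eqVneq (owner u) a) => [ou /eqP tuv| ou Euv].
          have [w0] := c1 ou.
          have su : s u = None.
            by case su: (s u) => //; have := Dom u; rewrite su => /(_ isT); rewrite (negbTE (nZ u uX)).
          rewrite /tangle_upd ffunE (Xt u uX) ou eqxx su /= tuv => -[<-] //.
        by apply: c2 => //; [apply: (subsetP tS) | rewrite in_setU vt orbT].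
      case/set0Pn: ET0 => y; rewrite /ET inE => /andP [yS /andP [ynt /existsP [u /andP [ut /and3P [ou uS Euy]]]]].
      have yZ : y \in Z by apply: (subsetP ETZ); rewrite /ET inE yS ynt /=; apply/existsP; exists u; rewrite ut ou uS Euy.
      have [_ c2] := cX u (tX u ut).
      have oua : owner u != a by rewrite -ta.
      have yZ' : y \in Z :|: t.1 by rewrite in_setU yZ.
      have := c2 oua y yS Euy yZ'.
      by move=> /Xt; rewrite (negbTE ynt).
    suff cl : closedZ S a Z s (X :&: Z).
      have [x] := I _ (subsetIr _ _) X'0 cl; rewrite inE => /andP [xX _] xA; by exists x.
    move=> u; rewrite inE => /andP [uX uZ]; have [c1 c2] := cX u uX; split.
      move=> ou; have [w0] := c1 ou.
      have hsu : s u != None.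
        by apply/negP => /eqP su; have := hnone u; rewrite /= uX uZ ou eqxx su.
      rewrite /tangle_upd ffunE (negbTE hsu) !andbF => suw w0X.
      by exists w0 => //; rewrite inE w0X (R _ _ suw).
    move=> ou w wS Euw wZ; rewrite inE wZ andbT; apply: c2 => //.
    by rewrite in_setU wZ.
Qed.


Lemma tattr_sub (S : {set V}) (Tt : {set tangle V}) (a : bool) (A : {set V})
  (st : {set V} * {ffun V -> option V}) :
  A \subset S -> tattr_reach owner E pr S Tt a A st -> st.1 \subset S.
Proof.
move=> AS; elim=> // st0 st' _ IH step; case: step IH => /=.
- by move=> Z s v w vS _ _ _ _ IH; rewrite subUset sub1set vS IH.
- by move=> Z s v vS _ _ _ IH; rewrite subUset sub1set vS IH.
- by [].
- by move=> Z s t _ tS _ _ _ _ IH; rewrite subUset IH tS.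
Qed.

Lemma YZ_sub S a Z s : YZ owner E S a Z s \subset Z.
Proof. by apply/bigcupsP => X /andP []. Qed.

Lemma YZ_closed S a Z s u : u \in YZ owner E S a Z s ->
  (owner u = a -> exists2 w, s u = Some w & w \in YZ owner E S a Z s) /\
  (owner u != a -> forall w, E u w -> w \in S -> w \in YZ owner E S a Z s).
Proof.
case/bigcupP => X /andP [XZ /forall_inP cX] uX.
have sub : X \subset YZ owner E S a Z s by apply: (bigcup_sup X); rewrite XZ /ext_closed; apply/forall_inP.
have := cX u uX; split.
  move=> ou; move: H; rewrite ou eqxx; case: (s u) => // w wX.
  by exists w => //; apply: (subsetP sub).
move=> ou w Euw wS; move: H; rewrite (negbTE ou) => /forallP /(_ w); rewrite Euw wS /= => wX.
exact: (subsetP sub).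
Qed.

Lemma pmax_eq (S C : {set V}) v : C \subset S -> v \in C -> v \in top_set pr S ->
  pmax pr C = pmax pr S.
Proof.
move=> CS vC; rewrite inE => /andP [vS /eqP pv].
apply/eqP; rewrite eqn_leq; apply/andP; split.
  apply/bigmax_leqP => i iC; apply: (leq_bigmax_cond (F := pr)); exact: (subsetP CS).
by rewrite -pv; apply: (leq_bigmax_cond (F := pr)).
Qed.

Lemma extract_good (S : {set V}) (Z : {set V}) (s : {ffun V -> option V}) (t : tangle V) :
  Z \subset S -> ainv S (odd (pmax pr S)) (top_set pr S) (Z, s) ->
  t \in extract_tangles owner E S (odd (pmax pr S)) Z s -> good t.
Proof.
set a := odd (pmax pr S).
move=> ZS [AZ R Dom D I]; rewrite inE => /andP [bs /eqP t2].
move: bs; rewrite /bscc_with_edge => /and5P [CY C0 sc cl _].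
set Y := YZ owner E S a Z s in CY sc cl.
have closeC : forall u v, u \in t.1 -> Hrel owner E S a Y s u v -> v \in t.1.
  by move=> u v uC h; move/forall_inP: cl => /(_ u uC) /forallP /(_ v); rewrite h.
have YZ' := YZ_sub S a Z s.
have clZ : closedZ S a Z s t.1.
  move=> u uC; have uY := subsetP CY u uC; have [c1 c2] := YZ_closed uY; split.
    move=> ou; have [w suw wY] := c1 ou; exists w => //.
    by apply: (closeC u) => //; rewrite /Hrel uY wY ou eqxx suw /=.
  move=> ou w wS Euw _; have wY := c2 ou w Euw wS.
  by apply: (closeC u) => //; rewrite /Hrel uY wY (negbTE ou) Euw wS.
have CZ : t.1 \subset Z := subset_trans CY YZ'.
have [v vC vA] := I _ CZ C0 clZ.
have pe := pmax_eq (subset_trans CZ ZS) vC vA.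
have aC : odd (pmax pr t.1) = a by rewrite pe.
split.
  move=> u uC; rewrite aC => ou; have [c1 _] := clZ u uC; have [w suw wC] := c1 ou.
  by exists w => //; rewrite t2 /restrict_strat ffunE uC.
move=> u w uC wC; rewrite aC.
have /forall_inP /(_ w wC) cuw := forall_inP sc u uC.
apply: (connect_transfer (P := mem t.1)) cuw => // x y xC hxy.
have xC' : x \in t.1 by [].
have yC := closeC x y xC' hxy; split => //.
move: hxy; rewrite /Hrel /tangle_rel xC' yC t2 /restrict_strat ffunE xC' /=.
by case/and3P => _ _; case: (owner x == a) => // /andP [].
Qed.

Definition sinv (T Y : {set tangle V}) (r : {ffun V -> option nat}) :=
  [/\ forall t, t \in T -> good t, forall t, t \in Y -> good t &
      forall v, v \in ~: domr r -> exists2 w, w \in ~: domr r & E v w].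

Lemma domr_set_r (r : {ffun V -> option nat}) (Z : {set V}) (p : nat) (v : V) : (v \in ~: domr (set_r r Z p)) = (v \notin Z) && (v \in ~: domr r).
Proof. by rewrite !inE /set_r ffunE; case: (v \in Z). Qed.

Lemma search_inv (T0 T : {set tangle V}) (r : {ffun V -> option nat}) (Y : {set tangle V}) : (forall v, exists w, E v w) ->
  (forall t, t \in T0 -> is_tangle owner E pr t) ->
  search_reach owner E pr T0 T r Y -> sinv T Y r.
Proof.
move=> Htot HT0; elim.
- split => //.
  + move=> t /HT0 [_ h2 h3 _]; split => // u ut ou.
    by have [w -> /andP [wt _]] := h2 u ut ou; exists w.
  + by move=> t; rewrite inE.
  + by move=> v _; have [w Evw] := Htot v; exists w => //; rewrite !inE /domr_set_r /empty_r ffunE.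
- move=> T' r' Y' Z s _ [HT HY HS] _ [reach hmax] _.
  set S := ~: domr r' in HS reach hmax *.
  set a := odd (pmax pr S).
  have AS : top_set pr S \subset S by apply/subsetP => x; rewrite inE => /andP [].
  have ZS := tattr_sub AS reach.
  have HTt : forall t, t \in subT T' S -> good t by move=> t; rewrite inE => /andP [/HT].
  have inv := tattr_inv HS HTt reach.
  split => //.
  + move=> t; rewrite in_setU => /orP [/HY //|]; exact: extract_good ZS inv.
  + move=> v; rewrite domr_set_r => /andP [vZ vS].
    case: (boolP [exists w, [&& w \in S, w \notin Z & E v w]]).
      by case/existsP => w /and3P [wS wZ Evw]; exists w => //; rewrite domr_set_r wZ.
    move=> /existsPn hn; exfalso.
    case: (boolP (owner v == a)) => [/eqP ov|ov].
      have [w wS Evw] := HS v vS.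
      have wZ : w \in Z by move: (hn w); rewrite wS Evw andbT /= negbK.
      by apply: hmax; eexists; apply: ta_alpha vS vZ ov wZ Evw.
    apply: hmax; eexists; apply: ta_nalpha vS vZ ov _ => w wS Evw.
    by move: (hn w); rewrite wS Evw andbT /= negbK.
- move=> T' r' Y' _ [HT HY _] /eqP r0; split.
  + by move=> t; rewrite in_setU => /orP [/HT|/HY].
  + by move=> t; rewrite inE.
  + by move=> v _; have [w Evw] := Htot v; exists w => //; rewrite !inE /empty_r ffunE.
Qed.

End Proofs.

Theorem lemma6 (V : finType) (owner : V -> bool) (E : rel V) (pr : V -> nat)
  (Htot : forall v : V, exists w, E v w)
  (T0 : {set tangle V})
  (HT0 : forall t, t \in T0 -> is_tangle owner E pr t)
  (T : {set tangle V}) (r : {ffun V -> option nat}) (Y : {set tangle V})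
  (Z : {set V}) (s : {ffun V -> option V}) :
  search_reach owner E pr T0 T r Y ->
  ~: domr r != set0 ->
  tattr_result owner E pr (~: domr r) (subT T (~: domr r))
     (odd (pmax pr (~: domr r))) (top_set pr (~: domr r)) Z s ->
  Z = ~: domr r ->
  extract_tangles owner E (~: domr r) (odd (pmax pr (~: domr r))) Z s != set0.
Proof.
move=> reach S0 [treach hmax] EZ; subst Z.
move: S0 treach hmax; set S := ~: domr r => S0 treach hmax.
have [HT _ HS] := search_inv Htot HT0 reach.
set a := odd (pmax pr S) in treach hmax *.
have HTt : forall t, t \in subT T S -> good owner E pr t by move=> t; rewrite inE => /andP [/HT].
have [AZ R Dom D I] := tattr_inv HS HTt treach; rewrite /= in AZ R Dom D I.
have alphaS : forall v, v \in S -> owner v = a -> exists2 w, s v = Some w & w \in S.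
  move=> v vS ov; case sv: (s v) => [w|]; first by exists w => //; exact: R sv.
  exfalso; have vA := D v vS ov sv; have [w wS Evw] := HS v vS.
  by apply: hmax; eexists; exact: ta_init vA ov sv wS Evw.
have YS : YZ owner E S a S s = S.
  apply/eqP; rewrite eqEsubset YZ_sub /= /YZ; apply: (bigcup_sup S); rewrite subxx /ext_closed /=.
  apply/forall_inP => v vS; case: ifP => [/eqP ov|_].
    by have [w -> wS] := alphaS v vS ov.
  by apply/forallP => w; apply/implyP => /andP [].
rewrite /extract_tangles YS.
set H := Hrel owner E S a S s.
have Hsucc : forall u, u \in S -> exists w, H u w.
  move=> u uS; case: (boolP (owner u == a)) => [/eqP ou|ou].
    have [w suw wS] := alphaS u uS ou; exists w; by rewrite /H /Hrel uS wS ou eqxx suw eqxx.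
  have [w wS Euw] := HS u uS; exists w; by rewrite /H /Hrel uS wS (negbTE ou) Euw.
have HSc : forall u v, u \in S -> H u v -> v \in S by move=> u v _ /and3P [].
case/set0Pn: S0 => x0 x0S.
pose F x := #|[set y | connect H x y]|.
case: (@arg_minnP _ x0 (mem S) F x0S) => x xS minF.
set C := [set y | connect H x y].
have CS : forall u, u \in C -> u \in S.
  by move=> u; rewrite inE; apply: (connect_closed (P := mem S)).
have Ceq : forall u, u \in C -> [set y | connect H u y] =i C.
  move=> u uC.
  have sub : [set y | connect H u y] \subset C.
    apply/subsetP => y; rewrite !inE => uy; move: uC; rewrite inE => xu.
    exact: connect_trans xu uy.
  apply/subset_cardP => //; apply/eqP; rewrite eqn_leq subset_leq_card //=.
  exact: minF (CS u uC).
apply/set0Pn; exists (C, restrict_strat s C); rewrite inE eqxx andbT /=.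
apply/and5P; split.
- by apply/subsetP => u /CS.
- by apply/set0Pn; exists x; rewrite inE connect0.
- apply/forall_inP => u uC; apply/forall_inP => v vC.
  by move: vC; rewrite -(Ceq u uC) inE.
- apply/forall_inP => u uC; apply/forallP => v; apply/implyP => huv.
  by rewrite -(Ceq u uC) inE connect1.
- have [w hxw] := Hsucc x xS.
  apply/existsP; exists x; rewrite inE connect0 /=; apply/existsP; exists w.
  by rewrite inE connect1.
Qed.
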